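(* Let $X$ be a real normed linear space, $x\in X\setminus\{\theta\}$ and $\varepsilon\in[0,2)$. Then the following are equivalent: (i) $x$ is $\varepsilon$-smooth, i.e. $\operatorname{diam} J(x)\le\varepsilon$; (ii) $\sup_{y\in S_X}\{\rho'_+(x,y)-\rho'_-(x,y)\}\le\varepsilon\|x\|$.
   Context: $S_X$ is the unit sphere of $X$, $X^*$ the dual space, $S_{X^*}$ its unit sphere. For $x\neq\theta$, $J(x)=\{f\in S_{X^*}: f(x)=\|x\|\}$ is the set of supporting functionals at $x$, and $\operatorname{diam}A=\sup_{f,g\in A}\|f-g\|$. The norm derivatives are $\rho'_{+}(x,y)=\lim_{\lambda\to0^+}\frac{\|x+\lambda y\|^2-\|x\|^2}{2\lambda}$ and $\rho'_{-}(x,y)=\lim_{\lambda\to0^-}\frac{\|x+\lambda y\|^2-\|x\|^2}{2\lambda}$. *)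

(* Defs.v *)
From HB Require Import structures.
From mathcomp Require Import all_boot all_order all_algebra.
From mathcomp Require Import all_classical all_reals all_analysis.
Set Implicit Arguments. Unset Strict Implicit. Unset Printing Implicit Defensive.
Import Order.TTheory GRing.Theory Num.Theory.
Import numFieldNormedType.Exports.
Local Open Scope classical_set_scope.
Local Open Scope ring_scope.

Section Defs.
Context {R : realType} {X : normedModType R}.

Definition is_dual (f : X -> R) : Prop :=
  (forall (a : R) (u v : X), f (a *: u + v) = a * f u + f v) /\ continuous f.

Definition dual_norm (f : X -> R) : R :=
  sup [set `|f y| | y in [set y : X | `|y| <= 1]].

Definition J (x : X) : set (X -> R) :=
  [set f | is_dual f /\ dual_norm f = 1 /\ f x = `|x|].

Definition diam_le (A : set (X -> R)) (eps : R) : Prop :=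
  forall f g, A f -> A g -> dual_norm (f \- g) <= eps.

Definition eps_smooth (x : X) (eps : R) : Prop := diam_le (J x) eps.

Definition rho_quot (x y : X) (l : R) : R :=
  (`|x + l *: y| ^+ 2 - `|x| ^+ 2) / (2 * l).

Definition rho_plus (x y : X) : R := lim (rho_quot x y @ at_right 0).
Definition rho_minus (x y : X) : R := lim (rho_quot x y @ at_left 0).

End Defs.

(* Main.v *)
Require Import Defs.
From HB Require Import structures.
From mathcomp Require Import all_boot all_order all_algebra.
From mathcomp Require Import all_classical all_reals all_analysis.
From mathcomp Require Import ring lra.
Import Order.TTheory GRing.Theory Num.Theory.
Import numFieldNormedType.Exports.
Local Open Scope classical_set_scope.
Local Open Scope ring_scope.

Section Analytic.
Context {R : realType} {X : normedModType R} (x : X).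

Definition q (v : X) (t : R) : R := (`|x + t *: v| - `|x|) / t.
Definition Dp (v : X) : R := inf [set q v t | t in `]0, +oo[].

Lemma q_lb v t : 0 < t -> - `|v| <= q v t.
Proof.
move=> t0; rewrite /q ler_pdivlMr // mulNr.
have := ler_normD (x + t *: v) (- (t *: v)).
rewrite addrK normrN normrZ gtr0_norm // [t * _]mulrC; lra.
Qed.

Lemma q_ub v t : 0 < t -> q v t <= `|v|.
Proof.
move=> t0; rewrite /q ler_pdivrMr //.
have := ler_normD x (t *: v).
rewrite normrZ gtr0_norm // [t * _]mulrC; lra.
Qed.

Lemma q_mono v s t : 0 < s -> s <= t -> q v s <= q v t.
Proof.
move=> s0 st; have t0 : 0 < t by apply: lt_le_trans st.
have e : x + s *: v = (1 - s / t) *: x + (s / t) *: (x + t *: v).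
  by rewrite scalerDr scalerA divfK ?gt_eqF // scalerBl scale1r addrA subrK.
have l0 : 0 <= s / t by rewrite divr_ge0 // ltW.
have l1 : s / t <= 1 by rewrite ler_pdivrMr // mul1r.
have H : `|x + s *: v| <= (1 - s / t) * `|x| + (s / t) * `|x + t *: v|.
  rewrite e (le_trans (ler_normD _ _)) // !normrZ -?normrM !ger0_norm ?subr_ge0 //.
rewrite /q ler_pdivrMr //.
have -> : (`|x + t *: v| - `|x|) / t * s = s / t * (`|x + t *: v| - `|x|) by ring.
move: H; set l := s / t; lra.
Qed.

Lemma q_nonempty v : [set q v t | t in `]0, +oo[] !=set0.
Proof. by exists (q v 1), 1 => //=; rewrite in_itv /= andbT ltr01. Qed.

Lemma q_hlb v : has_lbound [set q v t | t in `]0, +oo[].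
Proof.
exists (- `|v|) => z [t tI <-]; apply: q_lb.
by move: tI; rewrite /= in_itv /= andbT.
Qed.

Lemma Dp_le v t : 0 < t -> Dp v <= q v t.
Proof.
move=> t0; apply: ge_inf; first exact: q_hlb.
by exists t => //=; rewrite in_itv /= andbT.
Qed.

Lemma Dp_ge v a : (forall t, 0 < t -> a <= q v t) -> a <= Dp v.
Proof.
move=> H; apply: lb_le_inf; first exact: q_nonempty.
move=> z [t tI <-]; apply: H.
by move: tI; rewrite /= in_itv /= andbT.
Qed.

Lemma Dp_cvg v : q v t @[t --> 0^'+] --> Dp v.
Proof.
have := @nondecreasing_at_right_cvgr R (q v) 0 (BInfty _ false) isT.
apply.
- by move=> s t; rewrite !in_itv /= !andbT => s0 t0 st; exact: q_mono.
- exact: q_hlb.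
Qed.


Lemma ex_min_pos (s t : R) : 0 < s -> 0 < t -> exists m, [/\ 0 < m, m <= s & m <= t].
Proof.
move=> s0 t0; case: (leP s t) => h; [exists s | exists t]; split => //; exact: ltW.
Qed.

Lemma q_D u v t : 0 < t -> q (u + v) t <= q u (2 * t) + q v (2 * t).
Proof.
move=> t0; rewrite /q.
have e : x + t *: (u + v) = 2^-1 *: (x + (2 * t) *: u) + 2^-1 *: (x + (2 * t) *: v).
  have h1 : 2^-1 * (2 * t) = t by field.
  have h2 : 2^-1 + 2^-1 = 1 :> R by field.
  by rewrite !scalerDr !scalerA h1 addrACA -scalerDl h2 scale1r.
have H : `|x + t *: (u + v)| <= 2^-1 * `|x + (2 * t) *: u| + 2^-1 * `|x + (2 * t) *: v|.
  by rewrite e (le_trans (ler_normD _ _)) // !normrZ ger0_norm.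
set A := `|x + t *: (u + v)| in H *; set B := `|x + (2 * t) *: u| in H *.
set C := `|x + (2 * t) *: v| in H *; set N := `|x|.
have -> : (B - N) / (2 * t) + (C - N) / (2 * t) = ((B - N) / 2 + (C - N) / 2) / t.
  by field; rewrite gt_eqF.
rewrite ler_pM2r ?invr_gt0 //; lra.
Qed.

Lemma Dp_D u v : Dp (u + v) <= Dp u + Dp v.
Proof.
have H1 : forall s t, 0 < s -> 0 < t -> Dp (u + v) <= q u s + q v t.
  move=> s t s0 t0; have [m [m0 ms mt]] := ex_min_pos _ _ s0 t0.
  have m20 : 0 < m / 2 by rewrite divr_gt0.
  apply: (le_trans (Dp_le (u + v) _ m20)); apply: (le_trans (q_D u v _ m20)).
  have -> : 2 * (m / 2) = m by field.
  by apply: lerD; apply: q_mono.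
have H2 : forall t, 0 < t -> Dp (u + v) - q v t <= Dp u.
  move=> t t0; apply: Dp_ge => s s0; have := H1 s t s0 t0; lra.
have H3 : Dp (u + v) - Dp u <= Dp v.
  apply: Dp_ge => t t0; have := H2 t t0; lra.
lra.
Qed.

Lemma q_Z a v t : 0 < a -> 0 < t -> q (a *: v) t = a * q v (a * t).
Proof.
move=> a0 t0; rewrite /q scalerA [t * a]mulrC; field.
by rewrite !gt_eqF.
Qed.

Lemma Dp_Z a v : 0 < a -> Dp (a *: v) = a * Dp v.
Proof.
move=> a0; apply/le_anti/andP; split; last first.
  apply: Dp_ge => t t0; rewrite q_Z // ler_pM2l //; apply: Dp_le.
  exact: mulr_gt0.
suff : Dp (a *: v) / a <= Dp v.
  by rewrite ler_pdivrMr // mulrC.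
apply: Dp_ge => t t0; rewrite ler_pdivrMr //.
have ta : 0 < t / a by rewrite divr_gt0.
apply: (le_trans (Dp_le _ _ ta)); rewrite q_Z //.
have -> : a * (t / a) = t by field; rewrite gt_eqF.
by rewrite mulrC.
Qed.


Lemma Dp0 : Dp 0 = 0.
Proof.
have h : forall t, q 0 t = 0 by move=> t; rewrite /q scaler0 addr0 subrr mul0r.
apply/le_anti/andP; split; first by rewrite -(h 1); apply: Dp_le.
by apply: Dp_ge => t _; rewrite h.
Qed.

Lemma Dp_ub v : Dp v <= `|v|.
Proof. exact: (le_trans (Dp_le v 1 ltr01) (q_ub v 1 ltr01)). Qed.

Lemma Dp_lb v : - `|v| <= Dp v.
Proof. by apply: Dp_ge => t t0; apply: q_lb. Qed.

Lemma Dp_Npos v : 0 <= Dp v + Dp (- v).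
Proof. by rewrite -Dp0 -(subrr v); apply: Dp_D. Qed.

Lemma Dp_x : Dp x = `|x|.
Proof.
apply/le_anti/andP; split; first exact: Dp_ub.
apply: Dp_ge => t t0.
have e : x + t *: x = (1 + t) *: x by rewrite scalerDl scale1r.
rewrite /q e normrZ gtr0_norm; last by rewrite addr_gt0.
rewrite ler_pdivlMr //; lra.
Qed.

Lemma Dp_Nx : Dp (- x) = - `|x|.
Proof.
apply/le_anti/andP; split; last by rewrite -normrN; apply: Dp_lb.
have h : 0 < 2^-1 :> R by rewrite invr_gt0.
apply: (le_trans (Dp_le _ _ h)).
have e : x + 2^-1 *: - x = (1 - 2^-1) *: x by rewrite scalerN scalerBl scale1r.
rewrite /q e normrZ ger0_norm; last first.
  by rewrite subr_ge0 invf_le1 // ler1n.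
have -> : (1 - 2^-1) = 2^-1 :> R by field.
have -> : (2^-1 * `|x| - `|x|) / 2^-1 = - `|x| by field.
by [].
Qed.

Lemma rho_quotE y t : t != 0 -> rho_quot x y t = q y t * ((`|x + t *: y| + `|x|) / 2).
Proof.
move=> t0; rewrite /rho_quot /q; field.
by rewrite t0.
Qed.


Lemma half_cvg y : (fun t : R => (`|x + t *: y| + `|x|) / 2) @ 0^'+ --> `|x|.
Proof.
apply: cvg_at_right_filter.
have h1 : (fun t : R => x + t *: y) @ 0 --> x.
  have := cvgD (cvg_cst x) (cvgZ (@cvg_id _ (nbhs (0:R))) (cvg_cst y)).
  by rewrite scale0r addr0; apply; typeclasses eauto.
have h2 := cvgMr_tmp (b := 2^-1) (cvgD (cvg_norm h1) (cvg_cst `|x|)).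
have E : (`|x| + `|x|) / 2 = `|x| by field.
by move: h2; rewrite E; apply; typeclasses eauto.
Qed.

Lemma rho_plusE y : rho_plus x y = Dp y * `|x|.
Proof.
rewrite /rho_plus; apply: cvg_lim; first exact: norm_hausdorff.
have H : (q y \* (fun t : R => (`|x + t *: y| + `|x|) / 2)) @ 0^'+ --> Dp y * `|x|.
  by apply: cvgM; [exact: Dp_cvg | exact: half_cvg].
apply: (cvg_trans _ H).
apply: near_eq_cvg; near=> t.
rewrite /= rho_quotE //.
Unshelve. all: by end_near.
Qed.

Lemma rho_minusE y : rho_minus x y = - (Dp (- y) * `|x|).
Proof.
rewrite /rho_minus; apply: cvg_lim; first exact: norm_hausdorff.
apply/cvg_at_leftNP; rewrite oppr0.
have H : (- (q (- y) \* (fun t : R => (`|x + t *: - y| + `|x|) / 2))) @ 0^'+ --> - (Dp (- y) * `|x|).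
  by apply: cvgN; apply: cvgM; [exact: Dp_cvg | exact: half_cvg].
apply: (cvg_trans _ H).
apply: near_eq_cvg; near=> t.
rewrite /= rho_quotE; last by rewrite oppr_eq0; apply: lt0r_neq0; near: t; exact: nbhs_right_gt.
rewrite /q scaleNr -scalerN /= invrN mulrN mulNr.
Unshelve. all: by end_near.
Qed.

End Analytic.

Set Implicit Arguments. Unset Strict Implicit.

Section HahnBanach.
Context {R : realType} {X : lmodType R} (p : X -> R).
Hypothesis pD : forall u v, p (u + v) <= p u + p v.
Hypothesis pZ : forall a v, 0 < a -> p (a *: v) = a * p v.
Variables (y : X) (c : R).
Hypothesis base_dom : forall t, t * c <= p (t *: y).
Hypothesis y0 : y != 0.

Definition good (G : set (X * R)) :=
 [/\ forall a (u v : X * R), G u -> G v -> G (a *: u.1 + v.1, a * u.2 + v.2),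
     forall v a b, G (v, a) -> G (v, b) -> a = b,
     forall v a, G (v, a) -> a <= p v &
     forall t, G (t *: y, t * c)].

Definition G0 : set (X * R) := [set z | exists t, z = (t *: y, t * c)].

Lemma good_G0 : good G0.
Proof.
split.
- move=> a _ _ [t1 ->] [t2 ->] /=; exists (a * t1 + t2).
  by rewrite scalerDl scalerA mulrDl mulrA.
- move=> v a b [t1 [e1 ->]] [t2 [e2 ->]].
  have /eqP : (t1 - t2) *: y = 0 by rewrite scalerBl -e1 -e2 subrr.
  by rewrite scaler_eq0 (negbTE y0) orbF subr_eq0 => /eqP ->.
- by move=> v a [t [-> ->]].
- by move=> t; exists t.
Qed.

Section Ext.
Variable A : set (X * R).
Hypothesis gA : good A.
Variable v : X.
Hypothesis nv : forall a, ~ A (v, a).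

Let A00 : A (0, 0).
Proof. by case: gA => _ _ _ /(_ 0); rewrite scale0r mul0r. Qed.

Let AZ s w a : A (w, a) -> A (s *: w, s * a).
Proof.
by case: gA => L _ _ _ h; have := L s _ _ h A00; rewrite /= addr0 addr0.
Qed.

Let AD w a w' a' : A (w, a) -> A (w', a') -> A (w + w', a + a').
Proof.
by case: gA => L _ _ _ h h'; have := L 1 _ _ h h'; rewrite /= scale1r mul1r.
Qed.

Let Adom w a : A (w, a) -> a <= p w.
Proof. by case: gA => _ _ D _; apply: D. Qed.

Let key w a w' a' : A (w, a) -> A (w', a') -> a - p (w - v) <= p (w' + v) - a'.
Proof.
move=> h h'; have := Adom (AD h h').
have := pD (w - v) (w' + v).
have -> : w - v + (w' + v) = w + w' by rewrite addrACA addNr addr0.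
lra.
Qed.

Let S := [set z | exists w a, A (w, a) /\ z = a - p (w - v)].

Let S_ub : ubound S (p v).
Proof.
move=> _ [w [a [h ->]]]; have := key h A00; rewrite add0r subr0; lra.
Qed.

Let S_ne : S !=set0.
Proof. by exists (0 - p (0 - v)), 0, 0. Qed.

Let c' := sup S.

Let c'_ge w a : A (w, a) -> a - p (w - v) <= c'.
Proof.
move=> h; apply: ub_le_sup; first by exists (p v); exact: S_ub.
by exists w, a.
Qed.

Let c'_le w a : A (w, a) -> c' <= p (w + v) - a.
Proof.
move=> h; apply: ge_sup => // _ [w0 [a0 [h0 ->]]]; exact: key.
Qed.

Definition extB : set (X * R) :=
  [set z | exists w a t, A (w, a) /\ z = (w + t *: v, a + t * c')].

Lemma extB_good : good extB.
Proof.
case: gA => L F D Bs; split.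
- move=> al _ _ [w1 [a1 [t1 [h1 ->]]]] [w2 [a2 [t2 [h2 ->]]]] /=.
  exists (al *: w1 + w2), (al * a1 + a2), (al * t1 + t2); split.
    exact: (L al (w1, a1) (w2, a2)).
  congr (_, _); last by ring.
  by rewrite scalerDr scalerA scalerDl addrACA.
- move=> z a b [w1 [a1 [t1 [h1 [e1 ->]]]]] [w2 [a2 [t2 [h2 [e2 ->]]]]].
  have [t12|t12] := eqVneq t1 t2.
    subst t2; have ew : w1 = w2 by apply: (addIr (t1 *: v)); rewrite -e1 -e2.
    by subst w2; rewrite (F _ _ _ h1 h2).
  exfalso.
  have E2 : (t1 - t2) *: v = - w1 + w2.
    rewrite scalerBl.
    have -> : t1 *: v = - w1 + (w1 + t1 *: v) by rewrite addKr.
    by rewrite -e1 e2 addrA addrK.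
  have ev : v = (t1 - t2)^-1 *: (- w1 + w2).
    by rewrite -E2 scalerA mulVf ?subr_eq0 // scale1r.
  case: (@nv ((t1 - t2)^-1 * (- a1 + a2))); rewrite {1}ev; apply: AZ.
  by have := L (-1) _ _ h1 h2; rewrite /= scaleN1r mulN1r.
- move=> z b [w [a [t [h [-> ->]]]]].
  have [t0|t0|->] := ltgtP t 0; last first.
  + by rewrite scale0r mul0r !addr0; apply: Adom.
  + have h' := c'_le (AZ t^-1 h).
    have e : w + t *: v = t *: (t^-1 *: w + v).
      by rewrite scalerDr scalerA mulfV ?gt_eqF // scale1r.
    rewrite e pZ //.
    have := ler_wpM2l (ltW t0) h'.
    rewrite mulrBr mulrA mulfV ?gt_eqF // mul1r; lra.
  + set s := - t; have s0 : 0 < s by rewrite /s oppr_gt0.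
    have ts : t = - s by rewrite /s opprK.
    have h' := c'_ge (AZ s^-1 h).
    have e : w + t *: v = s *: (s^-1 *: w - v).
      by rewrite ts scalerBr scalerA mulfV ?gt_eqF // scale1r scaleNr.
    rewrite e pZ //.
    have := ler_wpM2l (ltW s0) h'.
    rewrite mulrBr mulrA mulfV ?gt_eqF // mul1r ts; lra.
- move=> t; exists (t *: y), (t * c), 0; split => //.
  by rewrite scale0r mul0r !addr0.
Qed.

Lemma extB_proper : A `<` extB.
Proof.
split.
  case=> w a h; exists w, a, 0; split => //.
  by rewrite scale0r mul0r !addr0.
move=> /(_ (v, c')) H; apply: (@nv c'); apply: H.
by exists 0, 0, 1; split => //; rewrite add0r scale1r add0r mul1r.
Qed.

End Ext.


Lemma HB_ext : exists f : X -> R,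
  [/\ forall a u v, f (a *: u + v) = a * f u + f v, f y = c & forall v, f v <= p v].
Proof.
pose P := fun A : set (X * R) => A = set0 \/ good A.
have chain : forall F : set (set (X * R)), F `<=` P -> total_on F subset ->
    P (\bigcup_(G in F) G).
  move=> F FP Ftot.
  case: (pselect (exists z, (\bigcup_(G in F) G) z)) => [[z0 [G1 FG1 Gz0]] | no];
    last first.
    left; apply/seteqP; split => z // hz; exfalso; apply: no; exists z; exact: hz.
  right.
  have goodof : forall G z, F G -> G z -> good G.
    move=> G z FG Gz; case: (FP G FG) => // Ge; by rewrite Ge in Gz.
  have two : forall z1 z2, (\bigcup_(G in F) G) z1 -> (\bigcup_(G in F) G) z2 ->
      exists G, [/\ F G, good G, G z1 & G z2].
    move=> z1 z2 [G2 F2 h2] [G3 F3 h3]; case: (Ftot G2 G3 F2 F3) => s.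
      by exists G3; split => //; [exact: goodof F3 h3 | exact: s].
    by exists G2; split => //; [exact: goodof F2 h2 | exact: s].
  split.
  - move=> a u v hu hv; have [G [FG gG Gu Gv]] := two u v hu hv.
    by exists G => //; case: gG => L _ _ _; exact: L.
  - move=> v a b ha hb; have [G [FG gG Ga Gb]] := two _ _ ha hb.
    by case: gG => _ Fn _ _; exact: Fn Ga Gb.
  - move=> v a [G FG Ga]; case: (goodof _ _ FG Ga) => _ _ D _; exact: D.
  - move=> t; exists G1 => //; case: (goodof _ _ FG1 Gz0) => _ _ _ Bs; exact: Bs.
have [A [PA maxA]] := Zorn_bigcup chain.
have gA : good A.
  case: PA => [A0|//]; exfalso; apply: (maxA G0); last by right; exact: good_G0.
  rewrite A0; split; first by move=> z [].
  by move=> /(_ (0 *: y, 0 * c)) H; apply: H; exists 0.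
have full : forall v, exists a, A (v, a).
  move=> v; case: (pselect (exists a, A (v, a))) => // nv; exfalso.
  have nv' : forall a, ~ A (v, a) by move=> a Ha; apply: nv; exists a.
  apply: (maxA (extB A v)); first exact: extB_proper.
  by right; apply: extB_good.
pose f := fun v => projT1 (cid (full v)).
have fP : forall v, A (v, f v) by move=> v; exact: (projT2 (cid (full v))).
case: gA => L F D Bs.
exists f; split.
- move=> a u v; apply: (F (a *: u + v)); first exact: fP.
  exact: (L a (u, f u) (v, f v)).
- by apply: (F y); [exact: fP | have := Bs 1; rewrite scale1r mul1r].
- by move=> v; apply: D; exact: fP.
Qed.

End HahnBanach.

Unset Implicit Arguments.

Section Main.
Context {R : realType} {X : normedModType R}.

Definition linf (f : X -> R) := forall (a : R) (u v : X), f (a *: u + v) = a * f u + f v.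

Lemma lin0 f : linf f -> f 0 = 0.
Proof.
move=> Lf; have := Lf 1 0 0; rewrite scale1r addr0 mul1r => h; lra.
Qed.

Lemma linZ f a u : linf f -> f (a *: u) = a * f u.
Proof. by move=> Lf; have := Lf a u 0; rewrite addr0 lin0 // addr0. Qed.

Lemma linN f u : linf f -> f (- u) = - f u.
Proof. by move=> Lf; rewrite -scaleN1r linZ // mulN1r. Qed.

Lemma linD f u v : linf f -> f (u + v) = f u + f v.
Proof. by move=> Lf; have := Lf 1 u v; rewrite scale1r mul1r. Qed.

Lemma dual_le f M : linf f -> 0 <= M -> (forall v, `|f v| <= M * `|v|) ->
  dual_norm f <= M.
Proof.
move=> Lf M0 B; apply: ge_sup; first by exists `|f 0|, 0 => //=; rewrite normr0.
move=> _ [u /= u1 <-]; apply: (le_trans (B u)).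
by rewrite -{2}[M]mulr1 ler_wpM2l.
Qed.

Lemma dual_ge f M u : linf f -> 0 <= M -> (forall v, `|f v| <= M * `|v|) ->
  `|u| <= 1 -> `|f u| <= dual_norm f.
Proof.
move=> Lf M0 B u1; apply: ub_le_sup; last by exists u.
exists M => _ [w /= w1 <-]; apply: (le_trans (B w)).
by rewrite -{2}[M]mulr1 ler_wpM2l.
Qed.

Lemma dual_bound f : linf f -> dual_norm f = 1 -> forall v, `|f v| <= `|v|.
Proof.
move=> Lf d1.
set E := [set `|f y| | y in [set y : X | `|y| <= 1]].
have hs : has_sup E.
  apply: contrapT => ns; move: d1; rewrite /dual_norm -/E sup_out //.
  by move/eqP; rewrite eq_sym oner_eq0.
have ub : forall u, `|u| <= 1 -> `|f u| <= 1.
  move=> u u1; rewrite -d1; apply: sup_upper_bound => //; by exists u.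
move=> v; have [->|v0] := eqVneq v 0; first by rewrite lin0 // !normr0.
have nv : 0 < `|v| by rewrite normr_gt0.
have := ub (`|v|^-1 *: v).
rewrite normrZ normfV normr_id mulVf ?gt_eqF // lexx linZ // normrM normfV normr_id.
by move/(_ isT); rewrite ler_pdivrMl // mulr1.
Qed.

Lemma lin_cont f : linf f -> (forall v, `|f v| <= `|v|) -> continuous f.
Proof.
move=> Lf B v; apply/cvgrPdist_le => e e0.
near=> z.
have -> : f v - f z = f (v - z) by rewrite linD // linN.
apply: (le_trans (B _)); near: z.
by apply: cvgr_dist_le => //; exact: cvg_id.
Unshelve. all: by end_near.
Qed.

Variable x : X.
Hypothesis x0 : x != 0.

Lemma J_le_Dp f v : linf f -> (forall w, `|f w| <= `|w|) -> f x = `|x| -> f v <= Dp x v.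
Proof.
move=> Lf B fx; apply: Dp_ge => t t0; rewrite /q ler_pdivlMr //.
have := B (x + t *: v); rewrite linD // linZ // fx => h.
have := le_trans (ler_norm _) h; lra.
Qed.

Lemma mkJ f : linf f -> (forall v, f v <= Dp x v) -> J x f.
Proof.
move=> Lf fD.
have B : forall v, `|f v| <= `|v|.
  move=> v; rewrite ler_norml; apply/andP; split.
    rewrite lerNl -linN // -(normrN v); apply: (le_trans (fD _)); exact: Dp_ub.
  apply: (le_trans (fD _)); exact: Dp_ub.
have fx : f x = `|x|.
  apply/le_anti/andP; split; first by rewrite -(Dp_x x); exact: fD.
  by rewrite -lerN2 -linN // -(Dp_Nx x); exact: fD.
have N0 : 0 < `|x| by rewrite normr_gt0.
split; first by split => //; apply: lin_cont.
split => //; apply/le_anti/andP; split.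
  by apply: dual_le => // v; rewrite mul1r.
have u1 : `| `|x|^-1 *: x| <= 1 by rewrite normrZ normfV normr_id mulVf ?gt_eqF.
have B1 : forall v, `|f v| <= 1 * `|v| by move=> v; rewrite mul1r.
have := @dual_ge f 1 (`|x|^-1 *: x) Lf ler01 B1 u1.
by rewrite linZ // fx mulVf ?gt_eqF // normr1.
Qed.

Lemma base_ok y c : - Dp x (- y) <= c -> c <= Dp x y ->
  forall t, t * c <= Dp x (t *: y).
Proof.
move=> c1 c2 t; have [t0|t0|->] := ltgtP t 0; last first.
- by rewrite mul0r scale0r Dp0.
- by rewrite Dp_Z // ler_wpM2l // ltW.
- have -> : t *: y = (- t) *: (- y) by rewrite scalerN scaleNr opprK.
  rewrite Dp_Z ?oppr_gt0 //.
  have nt : 0 < - t by rewrite oppr_gt0.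
  have := ler_wpM2l (ltW nt) c1; lra.
Qed.

End Main.

Theorem lemma2p2 (R : realType) (X : normedModType R) (x : X) (eps : R) :
  x != 0 -> 0 <= eps < 2 ->
  (eps_smooth x eps <->
   (forall y : X, `|y| = 1 -> rho_plus x y - rho_minus x y <= eps * `|x|)).
Proof.
move=> x0 /andP[e0 _].
have N0 : 0 < `|x| by rewrite normr_gt0.
have rhoE : forall y, rho_plus x y - rho_minus x y = (Dp x y + Dp x (- y)) * `|x|.
  by move=> y; rewrite rho_plusE rho_minusE; ring.
split.
- move=> sm y y1; rewrite rhoE ler_pM2r //.
  have y0 : y != 0 by rewrite -normr_gt0 y1 ltr01.
  have Hs := Dp_Npos x y.
  have c1 : - Dp x (- y) <= Dp x y by lra.
  have [f [Lf fy fD]] := @HB_ext R X (Dp x) (Dp_D x) (Dp_Z x) y (Dp x y)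
    (base_ok x _ _ c1 (lexx _)) y0.
  have [g [Lg gy gD]] := @HB_ext R X (Dp x) (Dp_D x) (Dp_Z x) y (- Dp x (- y))
    (base_ok x _ _ (lexx _) c1) y0.
  have Jf := mkJ x x0 _ Lf fD.
  have Jg := mkJ x x0 _ Lg gD.
  have Hd := sm f g Jf Jg.
  have y1' : `|y| <= 1 by rewrite y1.
  have Lfg : linf (f \- g) by move=> a u v /=; rewrite Lf Lg; ring.
  have Bf := dual_bound _ Lf Jf.2.1.
  have Bg := dual_bound _ Lg Jg.2.1.
  have Bfg : forall v, `|(f \- g) v| <= 2 * `|v|.
    move=> v /=; apply: (le_trans (ler_normB _ _)).
    have := Bf v; have := Bg v; lra.
  have := dual_ge (f \- g) 2 y Lfg (ler0n _ 2) Bfg y1'.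
  rewrite /= fy gy opprK => h; have := le_trans (ler_norm _) (le_trans h Hd); lra.
- move=> H f g [[Lf _] [nf fx]] [[Lg _] [ng gx]].
  have Bf := dual_bound f Lf nf.
  have Bg := dual_bound g Lg ng.
  have fD : forall v, f v <= Dp x v by move=> v; exact: J_le_Dp.
  have gD : forall v, g v <= Dp x v by move=> v; exact: J_le_Dp.
  have Hu : forall u, `|u| = 1 -> Dp x u + Dp x (- u) <= eps.
    by move=> u u1; have := H u u1; rewrite rhoE ler_pM2r.
  have Lfg : linf (f \- g) by move=> a u v /=; rewrite Lf Lg; ring.
  apply: (dual_le (f \- g) eps Lfg e0) => v /=.
  have [->|v0] := eqVneq v 0; first by rewrite (lin0 _ Lf) (lin0 _ Lg) subrr !normr0 mulr0.
  have nv : 0 < `|v| by rewrite normr_gt0.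
  set u := `|v|^-1 *: v.
  have u1 : `|u| = 1 by rewrite /u normrZ normfV normr_id mulVf ?gt_eqF.
  have ev : v = `|v| *: u by rewrite /u scalerA mulfV ?gt_eqF // scale1r.
  have key : `|f u - g u| <= eps.
    have h1 := Hu u u1; have h2 := fD u; have h3 := fD (- u); have h4 := gD u.
    have h5 := gD (- u); rewrite (linN _ _ Lf) in h3; rewrite (linN _ _ Lg) in h5.
    rewrite ler_norml; apply/andP; split; lra.
  have -> : f v - g v = `|v| * (f u - g u) by rewrite {1 2}ev (linZ _ _ _ Lf) (linZ _ _ _ Lg) mulrBr.
  by rewrite normrM normr_id mulrC ler_wpM2r.
Qed.
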